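(* Let $\mathbf{FdHilb}_{\mathrm{Un}}$ be the category of finite-dimensional Hilbert spaces with unitary maps, $\mathbf{Conv}$ the category of convex sets with affine maps, and $\mathbf{EMod}$ the category of effect modules over $[0,1]$. For $H$ in $\mathbf{FdHilb}_{\mathrm{Un}}$ let $\mathcal{DM}(H)=\{A \ge 0 : \mathrm{tr}(A)=1\}$ be the convex set of density operators and $\mathcal{E}f(H)=\{A : 0\le A\le I\}$ (Löwner order) the effect module of effects. There is a dual adjunction $\mathbf{Conv}(-,[0,1]) \colon \mathbf{Conv}\rightleftarrows \mathbf{EMod}^{\mathrm{op}} \colon \mathbf{EMod}(-,[0,1])$, and there are natural isomorphisms $$\mathrm{hs}_{\mathcal{E}f}\colon \mathcal{E}f(H)\xrightarrow{\ \cong\ } \mathbf{Conv}\big(\mathcal{DM}(H),[0,1]\big),\ A\mapsto \mathrm{tr}(A\,-),\qquad \mathrm{hs}_{\mathcal{DM}}\colon \mathcal{DM}(H)\xrightarrow{\ \cong\ } \mathbf{EMod}\big(\mathcal{E}f(H),[0,1]\big),\ B\mapsto \mathrm{tr}(B\,-),$$ in $\mathbf{EMod}$ and $\mathbf{Conv}$ respectively, which give rise to a map of adjunctions from the self-adjunction $(-)^\dagger \dashv (-)^\dagger$ between $\mathbf{FdHilb}_{\mathrm{Un}}$ and $\mathbf{FdHilb}_{\mathrm{Un}}^{\mathrm{op}}$ to the adjunction $\mathbf{Conv}\rightleftarrows\mathbf{EMod}^{\mathrm{op}}$, with vertical functors $\mathcal{DM}\colon \mathbf{FdHilb}_{\mathrm{Un}}\to\mathbf{Conv}$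 (states) and $\mathcal{E}f\colon \mathbf{FdHilb}_{\mathrm{Un}}^{\mathrm{op}}\to\mathbf{EMod}^{\mathrm{op}}$ (statements/effects).
   Context: An effect algebra is a partial commutative monoid $(E,0,\oplus)$, where $\oplus$ is a partial, commutative, associative binary operation with unit $0$ (write $x\perp y$ when $x\oplus y$ is defined), with an orthosupplement $(-)^\perp$ such that $x^\perp$ is the unique element with $x\oplus x^\perp = 1 := 0^\perp$ and $x\perp 1\Rightarrow x=0$. An effect module over $[0,1]$ is an effect algebra with a scalar multiplication by $[0,1]$ that preserves $\oplus$ in each variable and is a monoid action; morphisms preserve $1$, defined sums and scalars. $\mathcal{E}f(H)$ is an effect module with $A\perp B$ iff $A+B\le I$, $A\oplus B = A+B$, $A^\perp = I-A$, and usual scalar multiplication. Convex sets are Eilenberg-Moore algebras of the finitary distribution monad; $\mathcal{DM}(H)$ is convex under ordinary convex combinations of operators. On a unitary $U\colon H\to K$, both functors act by $A\mapsto UAU^\dagger$. The adjunction $\mathbf{Conv}\rightleftarrows\mathbf{EMod}^{\mathrm{op}}$ is given by homming into $[0,1]$: $\mathbf{Conv}(X,[0,1])$ is an effect module with pointwise partial sum (defined when the pointwise sum stays $\le 1$) and pointwise scalar multiplication, $\mathbf{EMod}(Y,[0,1])$ is a convex set with pointwise convex combinations, and the correspondence is by swapping arguments. $\mathrm{tr}$ is the trace of an operator. *)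

(* Defs.v *)
From HB Require Import structures.
From mathcomp Require Import all_boot all_order all_algebra.
From mathcomp Require Import complex.
From mathcomp Require Import reals.

Set Implicit Arguments.
Unset Strict Implicit.
Unset Printing Implicit Defensive.

Import Order.TTheory GRing.Theory Num.Theory.
Local Open Scope ring_scope.
Local Open Scope complex_scope.

(* The finite-dimensional Hilbert space H is C^n (columns), C = R[i].
   An operator H -> K (K = C^m) is a matrix 'M_(m, n). *)

Definition dagger (R : realType) (m n : nat) (A : 'M[R[i]]_(m, n)) : 'M[R[i]]_(n, m) :=
  (map_mx conjc A)^T.

Definition unitary (R : realType) (m n : nat) (U : 'M[R[i]]_(m, n)) : Prop :=
  U *m dagger U = 1%:M /\ dagger U *m U = 1%:M.

(* A >= 0 : <v, A v> >= 0 for every vector v (order of R[i]: real and >= 0) *)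
Definition psd (R : realType) (n : nat) (A : 'M[R[i]]_n) : Prop :=
  forall v : 'cV[R[i]]_n, 0 <= (dagger v *m A *m v) ord0 ord0.

Definition loewner (R : realType) (n : nat) (A B : 'M[R[i]]_n) : Prop := psd (B - A).

Definition density (R : realType) (n : nat) (A : 'M[R[i]]_n) : Prop :=
  psd A /\ \tr A = 1.

Definition effect (R : realType) (n : nat) (A : 'M[R[i]]_n) : Prop :=
  psd A /\ loewner A 1%:M.

Definition rsc (R : realType) (n : nat) (r : R) (A : 'M[R[i]]_n) : 'M[R[i]]_n :=
  (r%:C) *: A.

(* hs_Ef(A) = tr(A -), a function DM(H) -> [0,1] (real part; the trace is real) *)
Definition hsEf (R : realType) (n : nat) (A : 'M[R[i]]_n) : 'M[R[i]]_n -> R :=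
  fun rho => complex.Re (\tr (A *m rho)).

Definition hsDM (R : realType) (n : nat) (B : 'M[R[i]]_n) : 'M[R[i]]_n -> R :=
  fun A => complex.Re (\tr (B *m A)).

(* f : DM(C^n) -> R is an element of Conv(DM(C^n), [0,1]):
   values in [0,1] and affine (preserves convex combinations).
   Such functions are identified when they agree on DM(C^n). *)
Definition conv01 (R : realType) (n : nat) (f : 'M[R[i]]_n -> R) : Prop :=
  (forall rho, density rho -> 0 <= f rho <= 1) /\
  (forall rho sigma (r : R), density rho -> density sigma -> 0 <= r <= 1 ->
     f (rsc r rho + rsc (1 - r) sigma) = r * f rho + (1 - r) * f sigma).

(* phi : Ef(C^n) -> R is an element of EMod(Ef(C^n), [0,1]):
   values in [0,1], preserves 1, defined sums (A + B <= I), and scalars.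
   Such functions are identified when they agree on Ef(C^n). *)
Definition emod01 (R : realType) (n : nat) (phi : 'M[R[i]]_n -> R) : Prop :=
  (forall A, effect A -> 0 <= phi A <= 1) /\
  phi 1%:M = 1 /\
  (forall A B, effect A -> effect B -> loewner (A + B) 1%:M ->
     phi (A + B) = phi A + phi B) /\
  (forall (r : R) A, 0 <= r <= 1 -> effect A -> phi (rsc r A) = r * phi A).

Definition DM_Ef_functorial (R : realType) : Prop :=
  forall (m n : nat) (U : 'M[R[i]]_(m, n)), unitary U ->
    (forall rho, density rho -> density (U *m rho *m dagger U)) /\
    (forall A, effect A -> effect (U *m A *m dagger U)).

(* hs_Ef : Ef(C^n) -> Conv(DM(C^n),[0,1]) is an isomorphism of effect modules:
   well-defined, bijective (modulo equality on DM), an EMod-morphism whose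
   inverse is also an EMod-morphism (i.e. it reflects orthogonality). *)
Definition hsEf_EMod_iso (R : realType) (n : nat) : Prop :=
  (forall A rho : 'M[R[i]]_n, effect A -> density rho ->
     0 <= \tr (A *m rho) <= 1) /\
  (forall A : 'M[R[i]]_n, effect A -> conv01 (hsEf A)) /\
  (forall A B : 'M[R[i]]_n, effect A -> effect B ->
     (forall rho, density rho -> hsEf A rho = hsEf B rho) -> A = B) /\
  (forall f : 'M[R[i]]_n -> R, conv01 f ->
     exists A, effect A /\ forall rho, density rho -> f rho = hsEf A rho) /\
  (forall rho : 'M[R[i]]_n, density rho -> hsEf 1%:M rho = 1) /\
  (forall A B : 'M[R[i]]_n, effect A -> effect B -> loewner (A + B) 1%:M ->
     forall rho, density rho -> hsEf (A + B) rho = hsEf A rho + hsEf B rho) /\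
  (forall (r : R) (A : 'M[R[i]]_n), 0 <= r <= 1 -> effect A ->
     forall rho, density rho -> hsEf (rsc r A) rho = r * hsEf A rho) /\
  (forall A B : 'M[R[i]]_n, effect A -> effect B ->
     (forall rho, density rho -> hsEf A rho + hsEf B rho <= 1) ->
     loewner (A + B) 1%:M).

Definition hsDM_Conv_iso (R : realType) (n : nat) : Prop :=
  (forall B A : 'M[R[i]]_n, density B -> effect A ->
     0 <= \tr (B *m A) <= 1) /\
  (forall B : 'M[R[i]]_n, density B -> emod01 (hsDM B)) /\
  (forall B B' : 'M[R[i]]_n, density B -> density B' ->
     (forall A, effect A -> hsDM B A = hsDM B' A) -> B = B') /\
  (forall phi : 'M[R[i]]_n -> R, emod01 phi ->
     exists B, density B /\ forall A, effect A -> phi A = hsDM B A) /\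
  (forall (rho sigma : 'M[R[i]]_n) (r : R), density rho -> density sigma ->
     0 <= r <= 1 -> forall A, effect A ->
     hsDM (rsc r rho + rsc (1 - r) sigma) A = r * hsDM rho A + (1 - r) * hsDM sigma A).

Definition hs_natural (R : realType) : Prop :=
  forall (m n : nat) (U : 'M[R[i]]_(m, n)), unitary U ->
    (forall (A : 'M[R[i]]_m) (rho : 'M[R[i]]_n), effect A -> density rho ->
       hsEf (dagger U *m A *m U) rho = hsEf A (U *m rho *m dagger U)) /\
    (forall (rho : 'M[R[i]]_m) (A : 'M[R[i]]_n), density rho -> effect A ->
       hsDM (dagger U *m rho *m U) A = hsDM rho (U *m A *m dagger U)).

(* compatibility with the units/counits (the unit of (-)^dagger -| (-)^dagger is
   the identity; the unit/counit of Conv <-> EMod^op are evaluation maps):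
   EMod(hs_Ef,[0,1]) o eta_{DM(H)} = hs_DM  and
   Conv(hs_DM,[0,1]) o eps_{Ef(H)} = hs_Ef, both of which amount to: *)
Definition hs_unit_compat (R : realType) (n : nat) : Prop :=
  forall A rho : 'M[R[i]]_n, effect A -> density rho -> hsDM rho A = hsEf A rho.

(* Main.v *)
Require Import Defs.
From HB Require Import structures.
From mathcomp Require Import all_boot all_order all_algebra.
From mathcomp Require Import complex.
From mathcomp Require Import reals.
From mathcomp Require Import spectral ring.

Set Implicit Arguments.
Unset Strict Implicit.
Unset Printing Implicit Defensive.
Import Order.TTheory GRing.Theory Num.Theory.
Local Open Scope ring_scope.

Section Gen.
Variable C : numClosedFieldType.

Definition dg m n (A : 'M[C]_(m, n)) : 'M[C]_(n, m) := (map_mx Num.conj A)^T.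
Definition bf n (A : 'M[C]_n) (x y : 'cV[C]_n) : C := (dg x *m A *m y) ord0 ord0.
Definition qf n (A : 'M[C]_n) (v : 'cV[C]_n) : C := bf A v v.
Definition psdC n (A : 'M[C]_n) : Prop := forall v, 0 <= qf A v.

Lemma dgE m n (A : 'M[C]_(m, n)) i j : dg A i j = (A j i)^*.
Proof. by rewrite !mxE. Qed.

Lemma dg_mul m n p (A : 'M[C]_(m, n)) (B : 'M[C]_(n, p)) : dg (A *m B) = dg B *m dg A.
Proof. by rewrite /dg map_mxM trmx_mul. Qed.

Lemma dgK m n (A : 'M[C]_(m, n)) : dg (dg A) = A.
Proof. by apply/matrixP=> i j; rewrite !mxE conjCK. Qed.

Lemma dgD m n (A B : 'M[C]_(m, n)) : dg (A + B) = dg A + dg B.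
Proof. by apply/matrixP=> i j; rewrite !mxE rmorphD. Qed.

Lemma dgN m n (A : 'M[C]_(m, n)) : dg (- A) = - dg A.
Proof. by apply/matrixP=> i j; rewrite !mxE rmorphN. Qed.

Lemma dgB m n (A B : 'M[C]_(m, n)) : dg (A - B) = dg A - dg B.
Proof. by rewrite dgD dgN. Qed.

Lemma dgZ m n a (A : 'M[C]_(m, n)) : dg (a *: A) = a^* *: dg A.
Proof. by apply/matrixP=> i j; rewrite !mxE rmorphM. Qed.

Lemma dg0 m n : dg (0 : 'M[C]_(m, n)) = 0.
Proof. by apply/matrixP=> i j; rewrite !mxE rmorph0. Qed.

Lemma dg_scalar n a : dg (a%:M : 'M[C]_n) = (a^*)%:M.
Proof.
apply/matrixP=> i j; rewrite !mxE eq_sym.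
by rewrite rmorphMn.
Qed.

Lemma dg1 n : dg (1%:M : 'M[C]_n) = 1%:M.
Proof. by rewrite dg_scalar conjC1. Qed.

Lemma bf_conj n (A : 'M[C]_n) x y : bf (dg A) x y = (bf A y x)^*.
Proof.
rewrite /bf.
have -> : dg x *m dg A *m y = dg (dg y *m A *m x) by rewrite !dg_mul dgK mulmxA.
by rewrite dgE.
Qed.

Lemma qf_conj n (A : 'M[C]_n) v : qf (dg A) v = (qf A v)^*.
Proof. exact: bf_conj. Qed.

Lemma bfDl n (A B : 'M[C]_n) x y : bf (A + B) x y = bf A x y + bf B x y.
Proof. by rewrite /bf mulmxDr mulmxDl mxE. Qed.
Lemma bfNl n (A : 'M[C]_n) x y : bf (- A) x y = - bf A x y.
Proof. by rewrite /bf mulmxN mulNmx mxE. Qed.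
Lemma bfZl n a (A : 'M[C]_n) x y : bf (a *: A) x y = a * bf A x y.
Proof. by rewrite /bf -scalemxAr -scalemxAl mxE. Qed.
Lemma bfDx n (A : 'M[C]_n) x x' y : bf A (x + x') y = bf A x y + bf A x' y.
Proof. by rewrite /bf dgD !mulmxDl mxE. Qed.
Lemma bfDy n (A : 'M[C]_n) x y y' : bf A x (y + y') = bf A x y + bf A x y'.
Proof. by rewrite /bf mulmxDr mxE. Qed.
Lemma bfZx n (A : 'M[C]_n) a x y : bf A (a *: x) y = a^* * bf A x y.
Proof. by rewrite /bf dgZ -!scalemxAl mxE. Qed.
Lemma bfZy n (A : 'M[C]_n) a x y : bf A x (a *: y) = a * bf A x y.
Proof. by rewrite /bf -scalemxAr mxE. Qed.

Lemma qfDl n (A B : 'M[C]_n) v : qf (A + B) v = qf A v + qf B v.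
Proof. exact: bfDl. Qed.
Lemma qfNl n (A : 'M[C]_n) v : qf (- A) v = - qf A v.
Proof. exact: bfNl. Qed.
Lemma qfBl n (A B : 'M[C]_n) v : qf (A - B) v = qf A v - qf B v.
Proof. by rewrite qfDl qfNl. Qed.
Lemma qfZl n a (A : 'M[C]_n) v : qf (a *: A) v = a * qf A v.
Proof. exact: bfZl. Qed.

Definition ev n (i : 'I_n) : 'cV[C]_n := delta_mx i ord0.

Lemma bf_ev n (A : 'M[C]_n) i j : bf A (ev i) (ev j) = A i j.
Proof.
rewrite /bf /ev.
have -> : dg (delta_mx i ord0 : 'cV[C]_n) = delta_mx ord0 i.
  apply/matrixP=> a b; rewrite dgE !mxE.
  by case: (b == i); case: (a == ord0); rewrite ?rmorph0 ?rmorph1.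
rewrite -rowE -colE !mxE; done.
Qed.

Lemma qf_eq0 n (A : 'M[C]_n) : (forall v, qf A v = 0) -> A = 0.
Proof.
move=> H; apply/matrixP=> i j; rewrite mxE.
have Hii : forall k, A k k = 0 by move=> k; rewrite -bf_ev; apply: H.
have H1 := H (ev i + ev j).
have H2 := H (ev i + 'i *: ev j).
rewrite /qf !bfDx !bfDy !bfZx !bfZy !bf_ev !Hii in H1 H2.
rewrite conjCi !(mulr0, add0r, addr0) in H1 H2.
have e1 : A j i = - A i j by apply/eqP; rewrite -addr_eq0 addrC H1.
move: H2; rewrite e1 mulrN mulNr opprK -mulr2n => /eqP; rewrite mulrn_eq0 /=.
by rewrite mulf_eq0 (negPf (neq0Ci C)) /= => /eqP.
Qed.

Lemma ge0_conj (x : C) : 0 <= x -> x^* = x.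
Proof. by move/ger0_real/CrealP. Qed.

Lemma psd_herm n (A : 'M[C]_n) : psdC A -> dg A = A.
Proof.
move=> hA; apply/eqP; rewrite -subr_eq0; apply/eqP; apply: qf_eq0 => v.
by rewrite qfBl qf_conj ge0_conj ?subrr.
Qed.

Lemma psd0 n : psdC (0 : 'M[C]_n).
Proof. by move=> v; rewrite /qf /bf mulmx0 mul0mx mxE. Qed.
Lemma psdD n (A B : 'M[C]_n) : psdC A -> psdC B -> psdC (A + B).
Proof. by move=> hA hB v; rewrite qfDl addr_ge0. Qed.
Lemma psdZ n a (A : 'M[C]_n) : 0 <= a -> psdC A -> psdC (a *: A).
Proof. by move=> ha hA v; rewrite qfZl mulr_ge0. Qed.

Lemma qf_conjmx m n (U : 'M[C]_(m, n)) (A : 'M[C]_n) v :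
  qf (U *m A *m dg U) v = qf A (dg U *m v).
Proof. by rewrite /qf /bf dg_mul dgK !mulmxA. Qed.

Lemma psd_conjmx m n (U : 'M[C]_(m, n)) (A : 'M[C]_n) :
  psdC A -> psdC (U *m A *m dg U).
Proof. by move=> hA v; rewrite qf_conjmx. Qed.

Lemma qf1 n (v : 'cV[C]_n) : qf 1%:M v = \sum_i v i ord0 * (v i ord0)^*.
Proof.
rewrite /qf /bf mulmx1 mxE; apply: eq_bigr => k _.
by rewrite !mxE mulrC.
Qed.

Lemma psd1 n : psdC (1%:M : 'M[C]_n).
Proof. by move=> v; rewrite qf1 sumr_ge0 // => i _; apply: mul_conjC_ge0. Qed.

Lemma qf1_eq0 n (v : 'cV[C]_n) : qf 1%:M v = 0 -> v = 0.
Proof.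
rewrite qf1 => H; apply/matrixP=> i j; rewrite ord1 mxE.
have H2 := psumr_eq0P (fun k _ => mul_conjC_ge0 (v k ord0)) H.
by have /eqP := H2 i isT; rewrite mul_conjC_eq0 => /eqP.
Qed.

Lemma qf1_gt0 n (v : 'cV[C]_n) : v != 0 -> 0 < qf 1%:M v.
Proof.
move=> nz; rewrite lt_def psd1 andbT; apply/eqP=> /qf1_eq0 h.
by rewrite h eqxx in nz.
Qed.

Lemma psd_scalar n (a : C) : 0 <= a -> psdC (a%:M : 'M[C]_n).
Proof.
move=> ha; have -> : (a%:M : 'M[C]_n) = a *: 1%:M by rewrite scale_scalar_mx mulr1.
by apply: psdZ => //; apply: psd1.
Qed.

Definition rk n (v : 'cV[C]_n) : 'M[C]_n := v *m dg v.

Lemma tr11 (M : 'M[C]_1) : \tr M = M ord0 ord0.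
Proof. by rewrite /mxtrace big_ord1. Qed.

Lemma tr_rk n (A : 'M[C]_n) v : \tr (A *m rk v) = qf A v.
Proof. by rewrite /rk mulmxA mxtrace_mulC tr11 /qf /bf mulmxA. Qed.

Lemma tr_rk1 n (v : 'cV[C]_n) : \tr (rk v) = qf 1%:M v.
Proof. by rewrite -tr_rk mul1mx. Qed.

Lemma bf_swap n (x y : 'cV[C]_n) : bf 1%:M x y = (bf 1%:M y x)^*.
Proof. by rewrite -bf_conj dg1. Qed.

Lemma psd_rk n (v : 'cV[C]_n) : psdC (rk v).
Proof.
move=> w; rewrite /qf /bf /rk !mulmxA -mulmxA.
rewrite mxE big_ord1.
have -> : (dg w *m v) ord0 ord0 = bf 1%:M w v by rewrite /bf mulmx1.
have -> : (dg v *m w) ord0 ord0 = bf 1%:M v w by rewrite /bf mulmx1.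
by rewrite bf_swap mulrC mul_conjC_ge0.
Qed.

Lemma psd_diag_ge0 n (M : 'M[C]_n) i : psdC M -> 0 <= M i i.
Proof. by move=> hM; rewrite -bf_ev; apply: hM. Qed.

Lemma psd_scalar_le n (A : 'M[C]_n) (a : C) : psdC (a%:M - A) -> forall v,
  qf A v <= a * qf 1%:M v.
Proof.
move=> h v; have := h v; rewrite qfBl subr_ge0.
by rewrite -[a%:M]scalemx1 qfZl.
Qed.

Section Spec.
Local Open Scope sesquilinear_scope.
Lemma tC_dg m n (M : 'M[C]_(m, n)) : M ^t* = dg M.
Proof. by rewrite /dg map_trmx. Qed.

Lemma spec n (A : 'M[C]_n) : psdC A -> exists (P : 'M[C]_n) (d : 'rV[C]_n),
  [/\ dg P *m P = 1%:M, P *m dg P = 1%:M, (forall k, 0 <= d ord0 k) &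
      A = dg P *m diag_mx d *m P].
Proof.
move=> hA.
have nA : A \is normalmx by apply/normalmxP; rewrite tC_dg psd_herm.
have /orthomx_spectralP eA := nA.
set P := spectralmx A in eA; set d := spectral_diag A in eA.
have uP : P \is unitarymx by apply: spectral_unitarymx.
have PP : P *m dg P = 1%:M by rewrite -tC_dg; apply/unitarymxP.
have iP : invmx P = dg P by rewrite invmx_unitary // tC_dg.
have PP' : dg P *m P = 1%:M by rewrite -iP mulVmx // unitarymx_unit.
rewrite iP in eA.
exists P, d; split => // k.
have hM := psd_conjmx P hA.
have := psd_diag_ge0 k hM.
rewrite eA !mulmxA PP mul1mx -mulmxA PP mulmx1 mxE eqxx mulr1n //.
Qed.
End Spec.

Lemma tr_mul_diag n (M : 'M[C]_n) (d : 'rV[C]_n) :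
  \tr (M *m diag_mx d) = \sum_i M i i * d ord0 i.
Proof. by rewrite mul_mx_diag /mxtrace; apply: eq_bigr => i _; rewrite mxE. Qed.

Lemma tr_psd n (A B : 'M[C]_n) : psdC A -> psdC B -> 0 <= \tr (A *m B).
Proof.
move=> hA hB; have [P [d [PP PP' hd eB]]] := spec hB.
rewrite eB !mulmxA mxtrace_mulC !mulmxA tr_mul_diag sumr_ge0 // => i _.
rewrite mulr_ge0 // psd_diag_ge0 //.
by apply: psd_conjmx.
Qed.


Lemma qf_diag n (e : 'rV[C]_n) v :
  qf (diag_mx e) v = \sum_i e ord0 i * (v i ord0 * (v i ord0)^*).
Proof.
rewrite /qf /bf mul_mx_diag mxE; apply: eq_bigr => k _; rewrite !mxE; ring.
Qed.

Lemma psd_le_tr n (X : 'M[C]_n) : psdC X -> psdC ((\tr X)%:M - X).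
Proof.
move=> hX; have [P [d [PP PP' hd eX]]] := spec hX.
set t := \tr X.
have tE : t = \sum_i d ord0 i.
  by rewrite /t eX mxtrace_mulC mulmxA PP' mul1mx mxtrace_diag.
have -> : t%:M - X = dg P *m (t%:M - diag_mx d) *m dg (dg P).
  by rewrite dgK mulmxBr mulmxBl mul_mx_scalar -scalemxAl PP scalemx1 eX.
apply: psd_conjmx => v.
have -> : t%:M - diag_mx d = diag_mx (\row_k (t - d ord0 k)).
  by apply/matrixP=> i j; rewrite !mxE; case: (i == j); rewrite ?mulr1n ?mulr0n ?subrr.
rewrite qf_diag sumr_ge0 // => i _; rewrite mulr_ge0 ?mul_conjC_ge0 //.
rewrite mxE subr_ge0 tE (bigD1 i) //= lerDl sumr_ge0 //.
Qed.

Definition pr n (v : 'cV[C]_n) : 'M[C]_n := (qf 1%:M v)^-1 *: rk v.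

Lemma tr_pr n (A : 'M[C]_n) v : \tr (A *m pr v) = (qf 1%:M v)^-1 * qf A v.
Proof. by rewrite /pr -scalemxAr mxtraceZ tr_rk. Qed.

Lemma qf1_neq0 n (v : 'cV[C]_n) : v != 0 -> qf 1%:M v != 0.
Proof. by move=> nz; rewrite gt_eqF // qf1_gt0. Qed.

Lemma tr_pr1 n (v : 'cV[C]_n) : v != 0 -> \tr (pr v) = 1.
Proof. by move=> nz; rewrite -[pr v]mul1mx tr_pr mulVf // qf1_neq0. Qed.

Lemma psd_pr n (v : 'cV[C]_n) : psdC (pr v).
Proof. by apply: psdZ; [rewrite invr_ge0; apply: psd1 | apply: psd_rk]. Qed.

Lemma psd_1pr n (v : 'cV[C]_n) : v != 0 -> psdC (1%:M - pr v).
Proof. by move=> nz; have := psd_le_tr (psd_pr v); rewrite tr_pr1. Qed.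

Lemma rk_pr n (v : 'cV[C]_n) : v != 0 -> rk v = qf 1%:M v *: pr v.
Proof. by move=> nz; rewrite /pr scalerA mulfV ?scale1r // qf1_neq0. Qed.


Lemma scmxD n (a b : C) : ((a + b)%:M : 'M[C]_n) = a%:M + b%:M.
Proof. by apply/matrixP=> i j; rewrite !mxE mulrnDl. Qed.

Lemma psd_scal_mono n (X : 'M[C]_n) (x y : C) :
  psdC (x%:M - X) -> x <= y -> psdC (y%:M - X).
Proof.
move=> h le; have -> : y%:M - X = (y - x)%:M + (x%:M - X).
  by rewrite addrA -scmxD subrK.
by apply: psdD => //; apply: psd_scalar; rewrite subr_ge0.
Qed.

Definition densC n (X : 'M[C]_n) := psdC X /\ \tr X = 1.
Definition effC n (X : 'M[C]_n) := psdC X /\ psdC (1%:M - X).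

Section Rel.
Variable n : nat.
Variable K : 'M[C]_n -> Prop.
Variable g : 'M[C]_n -> C.

Definition lc (s : seq (C * 'M[C]_n)) : 'M[C]_n := \sum_(p <- s) p.1 *: p.2.
Definition lf (s : seq (C * 'M[C]_n)) : C := \sum_(p <- s) p.1 * g p.2.
Definition sc (s : seq (C * 'M[C]_n)) : C := \sum_(p <- s) p.1.

Definition PRprop := forall s1 s2,
  (forall p, p \in s1 -> 0 <= p.1 /\ K p.2) ->
  (forall p, p \in s2 -> 0 <= p.1 /\ K p.2) ->
  lc s1 = lc s2 -> lf s1 = lf s2.

Lemma RL_R : PRprop -> forall s, (forall p, p \in s -> p.1 \is Num.real /\ K p.2) ->
  lc s = 0 -> lf s = 0.
Proof.
move=> hPR s hs h0.
pose Q := fun p : C * 'M[C]_n => 0 <= p.1.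
pose sP := filter Q s.
pose sN := map (fun p => (- p.1, p.2)) (filter (predC Q) s).
have eL : lc s = lc sP - lc sN.
  rewrite /lc (bigID Q) /= big_filter big_map big_filter -sumrN; congr (_ + _).
  by apply: eq_bigr => p _; rewrite scaleNr opprK.
have eF : lf s = lf sP - lf sN.
  rewrite /lf (bigID Q) /= big_filter big_map big_filter -sumrN; congr (_ + _).
  by apply: eq_bigr => p _; rewrite mulNr opprK.
have hP : forall p, p \in sP -> 0 <= p.1 /\ K p.2.
  by move=> p; rewrite mem_filter => /andP [hq hp]; split => //; case: (hs p hp).
have hN : forall p, p \in sN -> 0 <= p.1 /\ K p.2.
  move=> p /mapP [q]; rewrite mem_filter => /andP [hq hp] -> /=.
  have [hr hK] := hs q hp; split => //.
  rewrite oppr_ge0 ltW //.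
  by rewrite real_ltNge // real0.
rewrite eF (hPR sP sN) ?subrr //.
by apply/eqP; rewrite -subr_eq0 -eL h0.
Qed.

Lemma dg_sum (s : seq (C * 'M[C]_n)) :
  dg (lc s) = \sum_(p <- s) (p.1)^* *: dg p.2.
Proof.
rewrite /lc; elim: s => [|p s IH]; first by rewrite !big_nil dg0.
by rewrite !big_cons dgD dgZ IH.
Qed.

Lemma RL_C : PRprop -> (forall X, K X -> dg X = X) ->
  forall s, (forall p, p \in s -> K p.2) -> lc s = 0 -> lf s = 0.
Proof.
move=> hPR hH s hs h0.
pose sRe := map (fun p : C * 'M[C]_n => ('Re p.1, p.2)) s.
pose sIm := map (fun p : C * 'M[C]_n => ('Im p.1, p.2)) s.
have hd : \sum_(p <- s) (p.1)^* *: p.2 = 0.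
  transitivity (\sum_(p <- s) (p.1)^* *: dg p.2); last by rewrite -dg_sum h0 dg0.
  by apply: eq_big_seq => p hp; rewrite hH //; apply: hs.
have eRe : lc sRe = 0.
  rewrite /lc big_map.
  have -> : \sum_(p <- s) 'Re p.1 *: p.2 =
     2^-1 *: (\sum_(p <- s) p.1 *: p.2 + \sum_(p <- s) (p.1)^* *: p.2).
    rewrite -big_split /= scaler_sumr; apply: eq_bigr => p _.
    by rewrite ReE -scalerDl scalerA mulrC.
  by rewrite hd -/(lc s) h0 addr0 scaler0.
have eIm : lc sIm = 0.
  rewrite /lc big_map.
  have -> : \sum_(p <- s) 'Im p.1 *: p.2 =
     ('i / 2) *: (\sum_(p <- s) (p.1)^* *: p.2 - \sum_(p <- s) p.1 *: p.2).
    rewrite -sumrN -big_split /= scaler_sumr; apply: eq_bigr => p _.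
    rewrite ImE -scaleNr -scalerDl scalerA; congr (_ *: _); ring.
  by rewrite hd -/(lc s) h0 subrr scaler0.
have hRe : forall p, p \in sRe -> p.1 \is Num.real /\ K p.2.
  by move=> p /mapP [q hq ->] /=; split; [apply: Creal_Re | apply: hs].
have hIm : forall p, p \in sIm -> p.1 \is Num.real /\ K p.2.
  by move=> p /mapP [q hq ->] /=; split; [apply: Creal_Im | apply: hs].
have fRe := RL_R hPR hRe eRe.
have fIm := RL_R hPR hIm eIm.
have -> : lf s = lf sRe + 'i * lf sIm.
  rewrite /lf !big_map mulr_sumr -big_split /=; apply: eq_bigr => p _.
  rewrite {1}(Crect p.1); ring.
by rewrite fRe fIm mulr0 addr0.
Qed.

End Rel.


Lemma sc_ge0 n (s : seq (C * 'M[C]_n)) : (forall p, p \in s -> 0 <= p.1) -> 0 <= sc s.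
Proof. by move=> h; rewrite /sc big_seq sumr_ge0 // => p /h. Qed.

Lemma tr_lc n (s : seq (C * 'M[C]_n)) : (forall p, p \in s -> \tr p.2 = 1) ->
  \tr (lc s) = sc s.
Proof.
rewrite /lc /sc; elim: s => [|p s IH] h; first by rewrite !big_nil mxtrace0.
rewrite !big_cons mxtraceD mxtraceZ h ?mem_head // mulr1 IH //.
by move=> q hq; apply: h; rewrite in_cons hq orbT.
Qed.

Section DensCone.
Variable n : nat.
Variable g : 'M[C]_n -> C.
Hypothesis HA : forall rho sigma (l : C), densC rho -> densC sigma -> 0 <= l -> l <= 1 ->
  g (l *: rho + (1 - l) *: sigma) = l * g rho + (1 - l) * g sigma.

Lemma cone_dens s : (forall p, p \in s -> 0 <= p.1 /\ densC p.2) ->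
  (sc s = 0 /\ lc s = 0 /\ lf g s = 0) \/
  (0 < sc s /\ exists sigma, densC sigma /\ lc s = sc s *: sigma /\ lf g s = sc s * g sigma).
Proof.
elim: s => [|[a X] s IH] hs.
  by left; rewrite /sc /lc /lf !big_nil.
have [ha hX] := hs (a, X) (mem_head _ _); rewrite /= in ha hX.
have hs' : forall p, p \in s -> 0 <= p.1 /\ densC p.2.
  by move=> p hp; apply: hs; rewrite in_cons hp orbT.
have ht := sc_ge0 (fun p hp => (hs' p hp).1).
rewrite /sc /lc /lf !big_cons /= -/(sc s) -/(lc s) -/(lf g s).
case: (IH hs') => [[t0 [l0 f0]] | [tp [sig [hsig [lsig fsig]]]]].
  rewrite t0 l0 f0 !addr0.
  move: ha; rewrite le0r => /orP [/eqP a0 | apos].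
    by left; rewrite a0 scale0r mul0r.
  by right; split => //; exists X.
right; set T := a + sc s.
have Tpos : 0 < T by rewrite /T ltr_wpDl.
have Tn0 : T != 0 by rewrite gt_eqF.
split => //.
set l := a / T.
have l0 : 0 <= l by rewrite /l divr_ge0 // ltW.
have l1 : l <= 1 by rewrite /l ler_pdivrMr // mul1r /T lerDl.
exists (l *: X + (1 - l) *: sig); split.
  split.
    apply: psdD; apply: psdZ => //; [exact: hX.1 | by rewrite subr_ge0 | exact: hsig.1].
  by rewrite mxtraceD !mxtraceZ hX.2 hsig.2 !mulr1 subrKC.
split.
  rewrite lsig scalerDr !scalerA; congr (_ *: _ + _ *: _); rewrite /l /T; field => //.
rewrite HA // fsig /l /T; field => //.
Qed.

Lemma PR_dens : PRprop (@densC n) g.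
Proof.
move=> s1 s2 h1 h2 e.
have t1 := tr_lc (fun p hp => (h1 p hp).2.2).
have t2 := tr_lc (fun p hp => (h2 p hp).2.2).
have et : sc s1 = sc s2 by rewrite -t1 -t2 e.
case: (cone_dens h1) => [[a0 [_ f1]] | [tp1 [sig1 [hs1 [l1 f1]]]]];
case: (cone_dens h2) => [[b0 [_ f2]] | [tp2 [sig2 [hs2 [l2 f2]]]]].
- by rewrite f1 f2.
- by move: tp2; rewrite -et a0 ltxx.
- by move: tp1; rewrite et b0 ltxx.
have sn0 : sc s1 != 0 by rewrite gt_eqF.
have esig : sig1 = sig2.
  by apply: (scalerI sn0); rewrite -l1 e l2 et.
by rewrite f1 f2 esig et.
Qed.
End DensCone.

Section EffCone.
Variable n : nat.
Variable g : 'M[C]_n -> C.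
Hypothesis HAdd : forall A B, effC A -> effC B -> psdC (1%:M - (A + B)) ->
  g (A + B) = g A + g B.
Hypothesis HSc : forall (l : C) A, 0 <= l -> l <= 1 -> effC A -> g (l *: A) = l * g A.

Lemma effC0 : effC (0 : 'M[C]_n).
Proof. by split; [apply: psd0 | rewrite subr0; apply: psd1]. Qed.

Lemma g0 : g 0 = 0.
Proof.
have := HAdd effC0 effC0; rewrite addr0 subr0 => /(_ (@psd1 _)).
by move/(congr1 (fun y => y - g 0)); rewrite subrr addrK.
Qed.

Lemma cone_eff s : (forall p, p \in s -> 0 <= p.1 /\ effC p.2) -> sc s <= 1 ->
  [/\ psdC (lc s), psdC ((sc s)%:M - lc s) & g (lc s) = lf g s].
Proof.
elim: s => [|[a X] s IH] hs.
  rewrite /sc /lc /lf !big_nil => _; split; [exact: psd0 | | exact: g0].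
  by rewrite subr0; apply: psd_scalar.
have [ha hX] := hs (a, X) (mem_head _ _); rewrite /= in ha hX.
have hs' : forall p, p \in s -> 0 <= p.1 /\ effC p.2.
  by move=> p hp; apply: hs; rewrite in_cons hp orbT.
have ht := sc_ge0 (fun p hp => (hs' p hp).1).
rewrite /sc /lc /lf !big_cons /= -/(sc s) -/(lc s) -/(lf g s) => hsum.
have t1 : sc s <= 1 by apply: le_trans hsum; rewrite lerDr.
have a1 : a <= 1 by apply: le_trans hsum; rewrite lerDl.
have [pL pL' gL] := IH hs' t1.
have eq1 : (a + sc s)%:M - (a *: X + lc s) = a *: (1%:M - X) + ((sc s)%:M - lc s).
  by rewrite scmxD scalerBr scalemx1 opprD addrACA.
have pX' : psdC (a *: (1%:M - X)) by apply: psdZ => //; exact: hX.2.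
have pS : psdC ((a + sc s)%:M - (a *: X + lc s)) by rewrite eq1; apply: psdD.
split.
- by apply: psdD => //; apply: psdZ => //; exact: hX.1.
- exact: pS.
have eA : effC (a *: X).
  split; first by apply: psdZ => //; exact: hX.1.
  apply: (@psd_scal_mono _ _ a) => //.
  by rewrite -scalemx1 -scalerBr.
have eL : effC (lc s) by split => //; apply: (psd_scal_mono pL').
rewrite HAdd //; last by apply: (psd_scal_mono pS).
by rewrite HSc // gL.
Qed.

Lemma PR_eff : PRprop (@effC n) g.
Proof.
move=> s1 s2 h1 h2 e.
have p1 := sc_ge0 (fun p hp => (h1 p hp).1).
have p2 := sc_ge0 (fun p hp => (h2 p hp).1).
set T := 1 + sc s1 + sc s2.
have Tpos : 0 < T by rewrite /T -addrA ltr_wpDr // addr_ge0.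
set k := T^-1.
have k0 : 0 < k by rewrite invr_gt0.
pose sk (s : seq (C * 'M[C]_n)) := map (fun p => (k * p.1, p.2)) s.
have lck : forall s, lc (sk s) = k *: lc s.
  by move=> s; rewrite /lc big_map scaler_sumr; apply: eq_bigr => p _; rewrite scalerA.
have lfk : forall s, lf g (sk s) = k * lf g s.
  by move=> s; rewrite /lf big_map mulr_sumr; apply: eq_bigr => p _; rewrite mulrA.
have sck : forall s, sc (sk s) = k * sc s.
  by move=> s; rewrite /sc big_map mulr_sumr.
have hk : forall s, (forall p, p \in s -> 0 <= p.1 /\ effC p.2) ->
    forall p, p \in sk s -> 0 <= p.1 /\ effC p.2.
  move=> s h p /mapP [q hq ->] /=; have [q0 qe] := h q hq; split => //.
  by rewrite mulr_ge0 // ltW.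
have b1 : sc (sk s1) <= 1.
  by rewrite sck /k mulrC ler_pdivrMr // mul1r /T -addrA addrCA lerDl addr_ge0.
have b2 : sc (sk s2) <= 1.
  by rewrite sck /k mulrC ler_pdivrMr // mul1r /T lerDr addr_ge0.
have [_ _ g1] := cone_eff (hk s1 h1) b1.
have [_ _ g2] := cone_eff (hk s2 h2) b2.
apply: (mulfI (negbT (gt_eqF k0))).
by rewrite -!lfk -g1 -g2 !lck e.
Qed.
End EffCone.


Definition w1 n (i j : 'I_n) : 'cV[C]_n := ev i + ev j.
Definition w2 n (i j : 'I_n) : 'cV[C]_n := ev i + 'i *: ev j.

Lemma delta_decomp n (i j : 'I_n) : delta_mx i j =
  2^-1 *: rk (w1 i j) + ('i / 2) *: rk (w2 i j) - ((1 + 'i) / 2) *: (rk (ev i) + rk (ev j)).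
Proof.
apply/matrixP => a b; rewrite !mxE !big_ord1 !mxE !eqxx !andbT.
rewrite !rmorphD !rmorphM /= !conjC_nat conjCi -mulnb natrM.
move: ((a == i)%:R : C) ((a == j)%:R : C) ((b == i)%:R : C) ((b == j)%:R : C) => x y z w.
apply/eqP; rewrite -subr_eq0.
have h2 : (2 : C) != 0 by rewrite pnatr_eq0.
set L := (X in X == 0).
have -> : L = (1 + 'i * 'i) * ((x * w - y * z + 'i * y * w) / 2) by rewrite /L; field.
by rewrite mulCii addrN mul0r.
Qed.


Lemma ev_neq0 n (i : 'I_n) : ev i != 0.
Proof.
apply/negP => /eqP /matrixP /(_ i ord0); rewrite !mxE !eqxx /= => /eqP.
by rewrite oner_eq0.
Qed.

Lemma w1_neq0 n (i j : 'I_n) : w1 i j != 0.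
Proof.
apply/negP => /eqP /matrixP /(_ i ord0); rewrite !mxE !eqxx /=.
rewrite andbT => h.
have : 0 < 1 + ((i == j)%:R : C) by apply: ltr_wpDr; rewrite ?ler0n ?ltr01.
by rewrite h ltxx.
Qed.

Lemma one_i_neq0 : (1 + 'i : C) != 0.
Proof.
apply/eqP => h.
have e : (1 + 'i) * (1 - 'i) = 1 - 'i * 'i :> C by ring.
rewrite h mul0r mulCii opprK in e.
by move/eqP: e; rewrite eq_sym -[1 + 1](natrD _ 1 1) pnatr_eq0.
Qed.

Lemma w2_neq0 n (i j : 'I_n) : w2 i j != 0.
Proof.
apply/negP => /eqP /matrixP /(_ i ord0); rewrite !mxE !eqxx /=.
rewrite andbT; case: (i == j) => /= /eqP; first by rewrite mulr1n mulr1 (negPf one_i_neq0).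
by rewrite mulr0n mulr0 addr0 oner_eq0.
Qed.

Section Construct.
Variable n : nat.
Variable K : 'M[C]_n -> Prop.
Variable g : 'M[C]_n -> C.
Hypothesis hPR : PRprop K g.
Hypothesis hH : forall X, K X -> dg X = X.
Hypothesis hpr : forall v, v != 0 -> K (pr v).

Definition GG (w : 'cV[C]_n) := qf 1%:M w * g (pr w).
Definition FF (i j : 'I_n) := 2^-1 * GG (w1 i j) + 'i / 2 * GG (w2 i j)
   - (1 + 'i) / 2 * (GG (ev i) + GG (ev j)).
Definition Amat : 'M[C]_n := \matrix_(a, b) FF b a.

Let E := index_enum ('I_n * 'I_n)%type.

Lemma lc_map (c : 'I_n * 'I_n -> C) (w : 'I_n * 'I_n -> 'cV[C]_n) :
  (forall p, w p != 0) ->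
  lc [seq (c p * qf 1%:M (w p), pr (w p)) | p <- E] = \sum_p c p *: rk (w p).
Proof.
move=> hw; rewrite /lc big_map; apply: eq_bigr => p _ /=.
by rewrite -scalerA -rk_pr.
Qed.

Lemma lf_map (c : 'I_n * 'I_n -> C) (w : 'I_n * 'I_n -> 'cV[C]_n) :
  lf g [seq (c p * qf 1%:M (w p), pr (w p)) | p <- E] = \sum_p c p * GG (w p).
Proof. by rewrite /lf big_map; apply: eq_bigr => p _ /=; rewrite /GG mulrA. Qed.

Lemma construct : forall X, K X -> g X = \tr (Amat *m X).
Proof.
move=> X hX.
pose c1 p := X p.1 p.2 * 2^-1.
pose c2 p := X p.1 p.2 * ('i / 2).
pose c3 p := - (X p.1 p.2 * ((1 + 'i) / 2)).
pose u1 (p : 'I_n * 'I_n) := w1 p.1 p.2. pose u2 (p : 'I_n * 'I_n) := w2 p.1 p.2.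
pose u3 (p : 'I_n * 'I_n) := ev p.1. pose u4 (p : 'I_n * 'I_n) := ev p.2.
pose mk c (w : 'I_n * 'I_n -> 'cV[C]_n) := [seq (c p * qf 1%:M (w p), pr (w p)) | p <- E].
pose s := (-1, X) :: (mk c1 u1 ++ mk c2 u2 ++ mk c3 u3 ++ mk c3 u4).
have hs : forall p, p \in s -> K p.2.
  move=> p; rewrite in_cons => /orP [/eqP -> //|].
  by rewrite !mem_cat => /or4P [] /mapP [q _ ->] /=; apply: hpr;
    rewrite ?w1_neq0 ?w2_neq0 ?ev_neq0.
have hlc : lc s = 0.
  rewrite /lc big_cons /= !big_cat /= -!/(lc _) !lc_map;
    try (by move=> p; rewrite ?w1_neq0 ?w2_neq0 ?ev_neq0).
  rewrite -!big_split /=.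
  have -> : \sum_p (c1 p *: rk (u1 p) + (c2 p *: rk (u2 p) + (c3 p *: rk (u3 p) + c3 p *: rk (u4 p)))) = X.
    rewrite [RHS]matrix_sum_delta pair_bigA; apply: eq_bigr => p _.
    rewrite delta_decomp /c1 /c2 /c3 /u1 /u2 /u3 /u4.
    by rewrite !(scalerDr, scalerBr, scalerN, scalerA, scaleNr, opprD, addrA).
  by rewrite scaleN1r addNr.
have hlf := RL_C hPR hH hs hlc.
move: hlf; rewrite /lf big_cons /= !big_cat /= -!/(lf g _) !lf_map mulN1r.
move/eqP; rewrite (addrC (- g X)) subr_eq0 => /eqP <-.
rewrite -!big_split /= /mxtrace.
rewrite [RHS](eq_bigr (fun a => \sum_b Amat a b * X b a)); last by move=> a _; rewrite mxE.
rewrite [RHS]exchange_big [RHS]pair_bigA; apply: eq_bigr => p _.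
rewrite mxE /FF /c1 /c2 /c3 /u1 /u2 /u3 /u4; ring.
Qed.
End Construct.

End Gen.

Local Open Scope complex_scope.

Section Main.
Variable R : realType.
Local Notation C := (R[i]).

Lemma ReD (x y : C) : complex.Re (x + y) = complex.Re x + complex.Re y.
Proof. by case: x; case: y. Qed.
Lemma ReM (r : R) (x : C) : complex.Re (r%:C * x) = r * complex.Re x.
Proof. by case: x => a b /=; rewrite mul0r subr0. Qed.
Lemma ReC (r : R) : complex.Re (r%:C : C) = r.
Proof. by []. Qed.

Lemma ge0_ReC (x : C) : 0 <= x -> x = (complex.Re x)%:C.
Proof. by case: x => a b; rewrite lecE /= => /andP [/eqP -> _]. Qed.

Lemma Re01 (x : C) : 0 <= x <= 1 -> 0 <= complex.Re x <= 1.
Proof. by case: x => a b; rewrite !lecE /= => /andP [/andP [_ ->] /andP [_ ->]]. Qed.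

Lemma le1_Re (x : C) : 0 <= x -> complex.Re x <= 1 -> x <= 1.
Proof. by case: x => a b; rewrite !lecE /= => /andP [/eqP -> _] ->; rewrite eqxx. Qed.

Lemma eqRe_ge0 (x y : C) : 0 <= x -> 0 <= y -> complex.Re x = complex.Re y -> x = y.
Proof. by move=> hx hy e; rewrite (ge0_ReC hx) (ge0_ReC hy) e. Qed.

Lemma ge0_01 (l : C) : 0 <= l -> l <= 1 -> l = (complex.Re l)%:C /\ 0 <= complex.Re l <= 1.
Proof. by move=> h0 h1; split; [apply: ge0_ReC | apply: Re01; rewrite h0 h1]. Qed.

Lemma qf0 n (A : 'M[C]_n) : qf A 0 = 0.
Proof. by rewrite /qf /bf dg0 !mul0mx mxE. Qed.

Lemma qf_pr n (A : 'M[C]_n) v : v != 0 -> qf A v = qf 1%:M v * \tr (A *m pr v).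
Proof. by move=> nz; rewrite tr_pr mulrA mulfV ?mul1r // qf1_neq0. Qed.

Lemma tr01 n (A rho : 'M[C]_n) : effC A -> densC rho -> 0 <= \tr (A *m rho) <= 1.
Proof.
move=> [hA hA'] [hr tr1]; rewrite tr_psd //=.
have := tr_psd hA' hr; rewrite mulmxBl mul1mx raddfB /= tr1 subr_ge0 //.
Qed.

Lemma dens_pr n (v : 'cV[C]_n) : v != 0 -> densC (pr v).
Proof. by move=> nz; split; [apply: psd_pr | apply: tr_pr1]. Qed.
Lemma eff_pr n (v : 'cV[C]_n) : v != 0 -> effC (pr v).
Proof. by move=> nz; split; [apply: psd_pr | apply: psd_1pr]. Qed.

Lemma inj_helper n (A B : 'M[C]_n) : psdC A -> psdC B ->
  (forall v, v != 0 -> complex.Re (\tr (A *m pr v)) = complex.Re (\tr (B *m pr v))) -> A = B.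
Proof.
move=> hA hB H; apply/eqP; rewrite -subr_eq0; apply/eqP; apply: qf_eq0 => v.
have [->|nz] := eqVneq v 0; first by rewrite qf0.
have h1 : 0 <= \tr (A *m pr v) by apply: tr_psd; [exact: hA | apply: psd_pr].
have h2 : 0 <= \tr (B *m pr v) by apply: tr_psd; [exact: hB | apply: psd_pr].
rewrite qfBl (qf_pr A nz) (qf_pr B nz) (eqRe_ge0 h1 h2 (H v nz)).
exact: subrr.
Qed.


Lemma psdE n (A : 'M[C]_n) : psd A = psdC A. Proof. by []. Qed.
Lemma densE n (A : 'M[C]_n) : density A = densC A. Proof. by []. Qed.
Lemma effE n (A : 'M[C]_n) : effect A = effC A. Proof. by []. Qed.
Lemma loewE n (A B : 'M[C]_n) : loewner A B = psdC (B - A). Proof. by []. Qed.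
Lemma daggerE m n (A : 'M[C]_(m, n)) : dagger A = dg A. Proof. by []. Qed.
Lemma rscE n (r : R) (A : 'M[C]_n) : rsc r A = r%:C *: A. Proof. by []. Qed.

Lemma partA : DM_Ef_functorial R.
Proof.
move=> m n U [UU1 UU2]; rewrite daggerE in UU1 UU2 *; split.
  move=> rho; rewrite !densE => -[hr tr1]; split; first exact: psd_conjmx.
  by rewrite mxtrace_mulC !mulmxA UU2 mul1mx.
move=> A; rewrite !effE => -[hA hA']; split; first exact: psd_conjmx.
have -> : 1%:M - U *m A *m dg U = U *m (1%:M - A) *m dg U.
  by rewrite mulmxBr mulmxBl mulmx1 UU1.
exact: psd_conjmx.
Qed.

Lemma partE n : hs_unit_compat R n.
Proof. by move=> A rho _ _; rewrite /hsDM /hsEf mxtrace_mulC. Qed.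

Lemma partD : hs_natural R.
Proof.
move=> m n U _; split.
  move=> A rho _ _; rewrite /hsEf !daggerE; congr complex.Re.
  by rewrite -!mulmxA mxtrace_mulC !mulmxA.
move=> rho A _ _; rewrite /hsDM !daggerE; congr complex.Re.
by rewrite -!mulmxA mxtrace_mulC !mulmxA.
Qed.


Lemma oneBC (r : R) : 1 - r%:C = (1 - r)%:C :> C.
Proof. by rewrite rmorphB rmorph1. Qed.

Lemma trZl n (r : R) (A B : 'M[C]_n) : \tr ((r%:C *: A) *m B) = r%:C * \tr (A *m B).
Proof. by rewrite -scalemxAl mxtraceZ. Qed.

Lemma partB n : hsEf_EMod_iso R n.
Proof.
split; [|split; [|split; [|split; [|split; [|split; [|split]]]]]].
- by move=> A rho hA hr; apply: tr01.
- move=> A hA; split.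
    by move=> rho hr; apply: Re01; apply: tr01.
  move=> rho sigma r hr hs _; rewrite /hsEf !rscE mulmxDr -!scalemxAr raddfD /=.
  by rewrite !mxtraceZ ReD !ReM.
- move=> A B [hA _] [hB _] H; apply: (inj_helper hA hB) => v nz.
  exact: (H _ (dens_pr nz)).
- move=> f [f01 faff].
  pose g := fun X : 'M[C]_n => ((f X)%:C : C).
  have HA : forall rho sigma (l : C), densC rho -> densC sigma -> 0 <= l -> l <= 1 ->
      g (l *: rho + (1 - l) *: sigma) = l * g rho + (1 - l) * g sigma.
    move=> rho sigma l hr hs l0 l1; have [-> hl] := ge0_01 l0 l1.
    rewrite oneBC /g -!rscE faff //.
    by rewrite rmorphD !rmorphM.
  have hPR := PR_dens HA.
  have hA := construct hPR (fun X hX => psd_herm hX.1) (fun v nz => dens_pr nz).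
  set A := Amat g in hA.
  have fpr : forall v : 'cV[C]_n, v != 0 -> qf A v = qf 1%:M v * (f (pr v))%:C.
    by move=> v nz; rewrite (qf_pr A nz) -hA //; apply: dens_pr.
  exists A; split.
    rewrite effE; split.
      move=> v; have [->|nz] := eqVneq v 0; first by rewrite qf0.
      rewrite fpr // mulr_ge0 ?psd1 // ler0c.
      by have /andP [] := f01 _ (dens_pr nz).
    move=> v; have [->|nz] := eqVneq v 0; first by rewrite qf0.
    rewrite qfBl fpr // -{1}[qf 1%:M v]mulr1 -mulrBr mulr_ge0 ?psd1 //.
    rewrite oneBC ler0c subr_ge0.
    by have /andP [] := f01 _ (dens_pr nz).
  by move=> rho hr; rewrite /hsEf -hA.
- by move=> rho [_ tr1]; rewrite /hsEf mul1mx tr1.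
- move=> A B _ _ _ rho _; rewrite /hsEf mulmxDl raddfD /=.
  exact: ReD.
- move=> r A _ _ rho _; rewrite /hsEf rscE trZl.
  exact: ReM.
- move=> A B [hA hA'] [hB hB'] H; rewrite loewE => v.
  have [->|nz] := eqVneq v 0; first by rewrite qf0.
  rewrite qfBl (qf_pr (A + B) nz) -{1}[qf 1%:M v]mulr1 -mulrBr.
  apply: mulr_ge0; first exact: psd1.
  rewrite subr_ge0 mulmxDl raddfD /=.
  have hA0 : 0 <= \tr (A *m pr v) by apply: tr_psd; [exact: hA | apply: psd_pr].
  have hB0 : 0 <= \tr (B *m pr v) by apply: tr_psd; [exact: hB | apply: psd_pr].
  apply: le1_Re; first exact: addr_ge0.
  rewrite ReD; exact: (H _ (dens_pr nz)).
Qed.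


Lemma partC n : hsDM_Conv_iso R n.
Proof.
have trC : forall (B A : 'M[C]_n), density B -> effect A -> 0 <= \tr (B *m A) <= 1.
  by move=> B A hB hA; rewrite mxtrace_mulC; apply: tr01.
split; [|split; [|split; [|split]]].
- exact: trC.
- move=> B hB; split; [|split; [|split]].
  + by move=> A hA; apply: Re01; apply: trC.
  + by rewrite /hsDM mulmx1 hB.2.
  + move=> A A' _ _ _; rewrite /hsDM mulmxDr raddfD /=; exact: ReD.
  + move=> r A _ _; rewrite /hsDM rscE -scalemxAr mxtraceZ; exact: ReM.
- move=> B B' [hB _] [hB' _] H; apply: (inj_helper hB hB') => v nz.
  exact: (H _ (eff_pr nz)).
- move=> phi [p01 [p1 [padd psc]]].
  pose g := fun X : 'M[C]_n => ((phi X)%:C : C).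
  have HAdd : forall A B, effC A -> effC B -> psdC (1%:M - (A + B)) -> g (A + B) = g A + g B.
    move=> A B hA hB hAB; rewrite /g padd; [exact: rmorphD | exact: hA | exact: hB | exact: hAB].
  have HSc : forall (l : C) A, 0 <= l -> l <= 1 -> effC A -> g (l *: A) = l * g A.
    move=> l A l0 l1 hA; have [-> hl] := ge0_01 l0 l1.
    rewrite /g -rscE psc; [exact: rmorphM | exact: hl | exact: hA].
  have hPR := PR_eff HAdd HSc.
  have hB := construct hPR (fun X hX => psd_herm hX.1) (fun v nz => eff_pr nz).
  set B := Amat g in hB.
  have fpr : forall v : 'cV[C]_n, v != 0 -> qf B v = qf 1%:M v * (phi (pr v))%:C.
    by move=> v nz; rewrite (qf_pr B nz) -hB; [by [] | apply: eff_pr].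
  exists B; split.
    rewrite densE; split.
      move=> v; have [->|nz] := eqVneq v 0; first by rewrite qf0.
      rewrite fpr //; apply: mulr_ge0; first exact: psd1.
      rewrite ler0c; have /andP [h _] := p01 _ (eff_pr nz); exact: h.
    have e1 : effC (1%:M : 'M[C]_n) by split; [exact: psd1 | rewrite subrr; exact: psd0].
    have -> : \tr B = \tr (B *m 1%:M) by rewrite mulmx1.
    by rewrite -hB; [rewrite /g p1 | exact: e1].
  by move=> A hA; rewrite /hsDM -hB.
- move=> rho sigma r _ _ _ A _; rewrite /hsDM !rscE mulmxDl -!scalemxAl raddfD /=.
  by rewrite !mxtraceZ ReD !ReM.
Qed.

Theorem main_all : DM_Ef_functorial R /\
  (forall n : nat, hsEf_EMod_iso R n) /\
  (forall n : nat, hsDM_Conv_iso R n) /\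
  hs_natural R /\
  (forall n : nat, hs_unit_compat R n).
Proof.
split; first exact: partA.
split; first exact: partB.
split; first exact: partC.
split; first exact: partD.
exact: partE.
Qed.

End Main.

Theorem theorem4p8 (R : realType) :
  DM_Ef_functorial R /\
  (forall n : nat, hsEf_EMod_iso R n) /\
  (forall n : nat, hsDM_Conv_iso R n) /\
  hs_natural R /\
  (forall n : nat, hs_unit_compat R n).
Proof. exact: main_all. Qed.
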